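(* Let $F$ be a finite field of characteristic $3$. Let $k\ge 0$ be an integer, $m=3k+1$, and $t$ an integer with $t^3\equiv 1\pmod m$ and $\gcd(m,t-1)=1$. Let $G=T_{3m}=\langle x,y\mid x^m=y^3=1,\ y^{-1}xy=x^t\rangle$ (of order $3m$) and $FG$ its group algebra. Let $s\in FG$ be the sum of all elements of $G$ whose order is a power of $3$ (including the identity), and let $\mathrm{Anh}(s)=\{\alpha\in FG\mid \alpha s=s\alpha=0\}$. Then $\mathrm{Anh}(s)$ is a nilpotent ideal of $FG$. *)

(* Defs.v *)
From HB Require Import structures.
From mathcomp Require Import all_boot all_order all_algebra all_fingroup.
From mathcomp Require Import pgroup.
Set Implicit Arguments. Unset Strict Implicit. Unset Printing Implicit Defensive.
Import Order.TTheory GRing.Theory Num.Theory.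
Local Open Scope ring_scope.

(* The group algebra F[gT] of a finite group gT over a ring F, represented
   as the F-valued functions on gT (a = sum_g a(g) g), with pointwise
   addition (the ffun zmodType structure) and convolution product. *)
Section GroupAlgebra.
Variables (F : comNzRingType) (gT : finGroupType).
Notation FG := {ffun gT -> F}.

Definition ga_mul (a b : FG) : FG :=
  [ffun g => \sum_(h : gT) a h * b (h^-1 * g)%g].

Definition ga_one : FG := [ffun g => (g == 1%g)%:R].

Definition ga_prod (l : seq FG) : FG := foldr ga_mul ga_one l.

Definition ga_ideal (I : FG -> Prop) : Prop :=
  [/\ I 0,
      (forall a b, I a -> I b -> I (a - b)) &
      (forall a r, I a -> I (ga_mul r a) /\ I (ga_mul a r))].

(* nilpotent: I^n = 0 for some n >= 1, i.e. every product of n elements of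
   I vanishes (I^n is additively spanned by such products). *)
Definition ga_nilpotent (I : FG -> Prop) : Prop :=
  exists n : nat, (0 < n)%N /\
    forall l : seq FG, size l = n -> (forall a, a \in l -> I a) -> ga_prod l = 0.

Definition s3 : FG := [ffun g => ((3.-elt g)%g : bool)%:R].

Definition Anh (s : FG) : FG -> Prop :=
  fun a => ga_mul a s = 0 /\ ga_mul s a = 0.

End GroupAlgebra.

(* Main.v *)
Require Import Defs.
From HB Require Import structures.
From mathcomp Require Import all_boot all_order all_algebra all_fingroup.
From mathcomp Require Import pgroup.
From mathcomp Require Import cyclic ring zify.
Import GRing.Theory Num.Theory.
Local Open Scope ring_scope.

Set Implicit Arguments. Unset Strict Implicit.
Section Alg.
Variables (F : comNzRingType) (gT : finGroupType).
Implicit Types a b c r : {ffun gT -> F}.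

Lemma ga_mulE a b g : ga_mul a b g = \sum_h a h * b (h^-1 * g)%g.
Proof. by rewrite ffunE. Qed.

Lemma ga_mulA a b c : ga_mul a (ga_mul b c) = ga_mul (ga_mul a b) c.
Proof.
apply/ffunP => g; rewrite !ffunE.
under eq_bigr do rewrite ffunE mulr_sumr.
under [RHS]eq_bigr do rewrite ffunE mulr_suml.
rewrite [RHS]exchange_big /=; apply: eq_bigr => h _.
rewrite [RHS](reindex_inj (mulgI h)) /=; apply: eq_bigr => l _.
rewrite mulrA; congr (_ * _ * c _); first by rewrite mulKg.
by rewrite invMg !mulgA.
Qed.

Lemma ga_mulBl a b c : ga_mul (a - b) c = ga_mul a c - ga_mul b c.
Proof.
apply/ffunP => g; rewrite !ffunE -sumrB; apply: eq_bigr => h _.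
by rewrite !ffunE mulrBl.
Qed.

Lemma ga_mulBr a b c : ga_mul c (a - b) = ga_mul c a - ga_mul c b.
Proof.
apply/ffunP => g; rewrite !ffunE -sumrB; apply: eq_bigr => h _.
by rewrite !ffunE mulrBr.
Qed.

Lemma ga_mul0l c : ga_mul 0 c = 0.
Proof. by apply/ffunP => g; rewrite !ffunE big1 // => h _; rewrite ffunE mul0r. Qed.

Lemma ga_mul0r c : ga_mul c 0 = 0.
Proof. by apply/ffunP => g; rewrite !ffunE big1 // => h _; rewrite ffunE mulr0. Qed.

Lemma ga_mulC_cl (s : {ffun gT -> F}) r : (forall z l, s (z ^ l)%g = s z) -> ga_mul s r = ga_mul r s.
Proof.
move=> hs; apply/ffunP => g; rewrite !ffunE.
have inj : injective (fun l => g * l^-1)%g.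
  by move=> u v /mulgI /invg_inj.
rewrite (reindex_inj inj) /=; apply: eq_bigr => l _.
rewrite invMg invgK mulgKV mulrC; congr (_ * _).
rewrite -(hs _ l) conjgE; congr (s _).
by rewrite mulgKV.
Qed.

Lemma pick1 a g : \sum_h a h * ((h^-1 * g)%g == 1%g)%:R = a g.
Proof.
rewrite (eq_bigr (fun h => if h == g then a h else 0)); last first.
  by move=> h _; rewrite -eq_mulVg1; case: eqP => _; rewrite ?mulr1 ?mulr0.
by rewrite -big_mkcond big_pred1_eq.
Qed.

Lemma ga_mul1 c : ga_mul c (ga_one F gT) = c.
Proof.
apply/ffunP => g; rewrite ffunE -[RHS](pick1 c g); apply: eq_bigr => h _.
by rewrite ffunE.
Qed.

End Alg.

Unset Implicit Arguments. Set Strict Implicit.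

Section Main.
Local Open Scope group_scope.
Local Open Scope ring_scope.
Variables (F : comNzRingType) (gT : finGroupType) (N : {group gT}) (y : gT).
Hypothesis hF3 : 3%:R = 0 :> F.
Hypothesis hN1 : #|N|%:R = 1 :> F.
Hypothesis hnorm : forall g : gT, g \in 'N(N).
Hypothesis hcover : forall g : gT, [|| g \in N, (y^-1 * g)%g \in N | (y * g)%g \in N].
Hypothesis hyN : y \notin N.
Hypothesis hy3 : (y ^+ 3 = 1)%g.
Hypothesis hs : forall z : gT, 3.-elt z = (z == 1%g) || (z \notin N).

Implicit Types a b c : {ffun gT -> F}.

Definition rinv (f : gT -> F) := forall g n, n \in N -> f (g * n)%g = f g.

Lemma rinv_eq f z w : rinv f -> (w^-1 * z)%g \in N -> f z = f w.
Proof. by move=> hf hn; rewrite -(hf w _ hn) mulKVg. Qed.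

Lemma linv f z n : rinv f -> n \in N -> f (n * z)%g = f z.
Proof.
move=> hf hn; have -> : (n * z = z * n ^ z)%g by rewrite conjgE mulKVg.
by rewrite hf // memJ_norm.
Qed.

Lemma yy : (y * y = y^-1)%g.
Proof. by apply: (mulgI y); rewrite mulgV -hy3 !expgS expg0 mulg1. Qed.

Lemma yiyi : (y^-1 * y^-1 = y)%g.
Proof. by rewrite -invMg yy invgK. Qed.

Lemma yiN : (y^-1)%g \notin N.
Proof. by rewrite groupV. Qed.

Lemma blk f (c : gT) : rinv f -> \sum_h f h * ((c^-1 * h)%g \in N)%:R = f c.
Proof.
move=> hf.
rewrite (eq_bigr (fun h => if (c^-1 * h)%g \in N then f h else 0)); last first.
  by move=> h _; case: (_ \in N); rewrite ?mulr1 ?mulr0.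
rewrite -big_mkcond (eq_bigr (fun _ => f c)); last by move=> h hh; apply: rinv_eq.
rewrite sumr_const.
have -> : #|[pred h | (c^-1 * h)%g \in N]| = #|N|.
  by rewrite -(card_lcoset N c); apply: eq_card => h; rewrite mem_lcoset.
by rewrite -mulr_natr hN1 mulr1.
Qed.

Lemma d1 h : h \in N -> (y^-1 * h)%g \notin N.
Proof.
move=> hh; apply/negP => H; case/negP: yiN.
by rewrite -(mulgK h (y^-1)%g) groupM ?groupV.
Qed.

Lemma d2 h : h \in N -> (y * h)%g \notin N.
Proof.
move=> hh; apply/negP => H; case/negP: hyN.
by rewrite -(mulgK h y) groupM ?groupV.
Qed.

Lemma d3 h : (y^-1 * h)%g \in N -> (y * h)%g \notin N.
Proof.
move=> hh; apply/negP => H; case/negP: yiN.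
have -> : (y^-1 = (y * h) * (y^-1 * h)^-1)%g.
  by rewrite invMg invgK mulgA mulgK yy.
by rewrite groupM ?groupV.
Qed.

Lemma part h : ((1^-1 * h)%g \in N)%:R + ((y^-1 * h)%g \in N)%:R
     + (((y^-1)^-1 * h)%g \in N)%:R = 1 :> F.
Proof.
rewrite invg1 mul1g invgK.
case/or3P: (hcover h) => hh.
- by rewrite hh (negbTE (d1 _ hh)) (negbTE (d2 _ hh)) addr0 addr0.
- rewrite hh (negbTE (d3 _ hh)); case: (boolP (h \in N)) => h1.
    by case/negP: (d1 _ h1).
  by rewrite add0r addr0.
- rewrite hh; case: (boolP (h \in N)) => h1; first by case/negP: (d2 _ h1).
  case: (boolP (y^-1 * h \in N)%g) => h2; first by case/negP: (d3 _ h2).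
  by rewrite !add0r.
Qed.

Lemma sum3 f : rinv f -> \sum_h f h = f 1%g + f y + f (y^-1)%g.
Proof.
move=> hf; rewrite -(blk _ 1%g hf) -(blk _ y hf) -(blk _ (y^-1)%g hf) -!big_split /=.
by apply: eq_bigr => h _; rewrite -!mulrDr part mulr1.
Qed.

Lemma s3E z : s3 F gT z = (z == 1%g)%:R + 1 - (z \in N)%:R.
Proof.
rewrite ffunE hs; case: (z =P 1%g) => [->|_]; first by rewrite group1 /= addrK.
by case: (z \in N); rewrite /= ?add0r ?subrr ?subr0.
Qed.

Lemma anh_P a : ga_mul a (s3 F gT) = 0 -> rinv a /\ \sum_h a h = 0.
Proof.
move=> H.
pose S := fun g => \sum_h a h * ((h^-1 * g)%g \in N)%:R.
have eq g : a g + \sum_h a h - S g = 0.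
  have H0 : \sum_h a h * s3 F gT (h^-1 * g)%g = 0.
    by have := congr1 (fun f : {ffun gT -> F} => f g) H; rewrite !ffunE.
  transitivity (\sum_h a h * s3 F gT (h^-1 * g)%g); last exact: H0.
  rewrite -(pick1 a g) /S -big_split -sumrB; apply: eq_bigr => h _.
  by rewrite s3E /= mulrBr mulrDr mulr1.
have hS g n : n \in N -> S (g * n)%g = S g.
  by move=> hn; rewrite /S; apply: eq_bigr => h _; rewrite mulgA groupMr.
have ha g : a g = S g - \sum_h a h.
  transitivity (a g + \sum_h a h - S g + S g - \sum_h a h); first by ring.
  by rewrite eq add0r.
have ra : rinv a by move=> g n hn; rewrite !ha hS.
split => //.
have S1 : S 1%g = a 1%g.
  rewrite -(blk _ 1%g ra) /S; apply: eq_bigr => h _.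
  by rewrite -[(h^-1 * 1)%g \in N]groupV invMg !invgK.
transitivity (a 1%g + \sum_h a h - S 1%g); first by rewrite S1; ring.
exact: eq.
Qed.

Lemma cyc3 (a0 a1 a2 b0 b1 b2 : F) : a0 + a1 + a2 = 0 -> b0 + b1 + b2 = 0 ->
  (a0 * b1 + a1 * b0 + a2 * b2 = a0 * b0 + a1 * b2 + a2 * b1) /\
  (a0 * b2 + a1 * b1 + a2 * b0 = a0 * b0 + a1 * b2 + a2 * b1).
Proof.
move=> sa sb.
have -> : a2 = - (a0 + a1).
  transitivity (a0 + a1 + a2 - (a0 + a1)); first by ring.
  by rewrite sa sub0r.
have -> : b2 = - (b0 + b1).
  transitivity (b0 + b1 + b2 - (b0 + b1)); first by ring.
  by rewrite sb sub0r.
split; apply/eqP; rewrite -subr_eq0.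
  by rewrite -(mul0r (a0 * b1 + a1 * b0 + a1 * b1)) -hF3; apply/eqP; ring.
by rewrite -(mul0r (a1 * b1 - a0 * b0)) -hF3; apply/eqP; ring.
Qed.

Lemma prod_const a b : rinv a -> \sum_h a h = 0 -> rinv b -> \sum_h b h = 0 ->
  exists lam, forall g, ga_mul a b g = lam.
Proof.
move=> ra sa rb sb.
have Hg g : ga_mul a b g = a 1%g * b g + a y * b (y^-1 * g)%g + a (y^-1)%g * b (y * g)%g.
  rewrite ffunE sum3 ?invg1 ?mul1g ?invgK //.
  by move=> h n hn /=; rewrite ra // invMg -mulgA linv // groupV.
rewrite (sum3 _ ra) in sa; rewrite (sum3 _ rb) in sb.
have [c1 c2] := cyc3 _ _ _ _ _ _ sa sb.
exists (a 1%g * b 1%g + a y * b (y^-1)%g + a (y^-1)%g * b y : F).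
have E z w : (w^-1 * z)%g \in N -> b z = b w by move=> hn; apply: rinv_eq.
move=> g; rewrite Hg; case/or3P: (hcover g) => hg.
- by rewrite (E g 1%g) ?invg1 ?mul1g // (E (y^-1 * g)%g (y^-1)%g) ?invgK ?mulKVg //
    (E (y * g)%g y) ?mulKg.
- rewrite (E g y) // (E (y^-1 * g)%g 1%g) ?invg1 ?mul1g //
    (E (y * g)%g (y^-1)%g) ?invgK ?mulgA ?yy //.
- rewrite (E g (y^-1)%g) ?invgK // (E (y^-1 * g)%g y) ?mulgA ?yiyi //
    (E (y * g)%g 1%g) ?invg1 ?mul1g //.
Qed.

Lemma main_res : ga_ideal (Anh (s3 F gT)) /\ ga_nilpotent (Anh (s3 F gT)).
Proof.
have hsc : forall z l, s3 F gT (z ^ l)%g = s3 F gT z by move=> z l; rewrite !ffunE p_eltJ.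
split.
  split.
  - by split; [apply: ga_mul0l | apply: ga_mul0r].
  - move=> a b [h1 h2] [h3 h4]; split.
      by rewrite ga_mulBl h1 h3 subr0.
    by rewrite ga_mulBr h2 h4 subr0.
  - move=> a r [h1 h2]; split; split.
    + by rewrite -ga_mulA h1 ga_mul0r.
    + by rewrite ga_mulA (ga_mulC_cl _ hsc) -ga_mulA h2 ga_mul0r.
    + by rewrite -ga_mulA -(ga_mulC_cl _ hsc) ga_mulA h1 ga_mul0l.
    + by rewrite ga_mulA h2 ga_mul0l.
exists 3%N; split => // l hl hI.
case: l hl hI => [|a [|b [|c [|? ?]]]] //= _ hI.
rewrite ga_mul1.
have [ra sa] := anh_P _ (proj1 (hI a (mem_head _ _))).
have [rb sb] := anh_P _ (proj1 (hI b ltac:(by rewrite !inE eqxx orbT))).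
have [rc sc] := anh_P _ (proj1 (hI c ltac:(by rewrite !inE eqxx !orbT))).
have [lam hl] := prod_const _ _ rb sb rc sc.
apply/ffunP => g; rewrite !ffunE.
under eq_bigr do rewrite hl.
by rewrite -mulr_suml sa mul0r.
Qed.

End Main.

Lemma nt (m : nat) (t : int) : (0 < m)%N -> (t ^+ 3 == 1 %[mod m])%Z ->
  gcdz m (t - 1) = 1%N ->
  (m %| (`|(t %% m)%Z|%N * `|(t %% m)%Z|%N + `|(t %% m)%Z|%N + 1))%N.
Proof.
move=> m0 h3 hg.
have hc : (`|(t %% m)%Z|%N : int) = (t %% m)%Z.
  by rewrite gez0_abs // modz_ge0 // eqz_nat -lt0n.
have d1 : (m %| t ^+ 2 + t + 1)%Z.
  rewrite -(@Gauss_dvdzr m (t - 1)); last by rewrite /coprimez hg.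
  rewrite eqz_mod_dvd in h3.
  by have -> : (t - 1) * (t ^+ 2 + t + 1) = t ^+ 3 - 1 by ring.
suff : (Posz m %| Posz (`|(t %% m)%Z|%N * `|(t %% m)%Z|%N + `|(t %% m)%Z|%N + 1))%Z by [].
rewrite !PoszD PoszM hc.
case/dvdzP: d1 => q hq.
have ht := divz_eq t m.
set p := (t %/ m)%Z in ht *; set r := (t %% m)%Z in ht *.
have -> : r = t - p * m by rewrite {1}ht; ring.
apply/dvdzP; exists (q - 2 * t * p + p * p * m - p).
transitivity (t ^+ 2 + t + 1 + (- 2 * t * p + p * p * m - p) * m); first by ring.
by rewrite hq; ring.
Qed.

Lemma cube (gT : finGroupType) (x y : gT) c : (y ^+ 3 = 1)%g -> (x ^ y = x ^+ c)%g ->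
  (x ^+ (c * c + c + 1) = 1)%g -> forall i,
  ((y * x ^+ i) ^+ 3 = 1)%g /\ ((y^-1 * x ^+ i) ^+ 3 = 1)%g.
Proof.
move=> hy hxy hx1 i.
have yy1 := yy _ _ hy.
have yiyi : (y^-1 * y^-1 = y)%g by rewrite -invMg yy1 invgK.
have J1 : ((x ^+ i) ^ y = x ^+ (c * i))%g by rewrite conjXg hxy -expgM.
have J2 : ((x ^+ i) ^ (y^-1) = x ^+ (c * c * i))%g.
  by rewrite -yy1 conjgM J1 conjXg hxy -expgM mulnA.
have E : (x ^+ (c * c * i) * x ^+ (c * i) * x ^+ i = 1)%g.
  rewrite -!expgD (_ : (c * c * i + c * i + i = (c * c + c + 1) * i)%N); last by lia.
  by rewrite expgM hx1 expg1n.
have E' : (x ^+ (c * i) * x ^+ (c * c * i) * x ^+ i = 1)%g.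
  rewrite -!expgD (_ : (c * i + c * c * i + i = (c * c + c + 1) * i)%N); last by lia.
  by rewrite expgM hx1 expg1n.
split.
- rewrite -E -J1 -J2; set n := (x ^+ i)%g.
  rewrite !conjgE invgK !expgS expg0 mulg1 !mulgA.
  by rewrite -[(y * n * y^-1 * y^-1)%g]mulgA yiyi.
- rewrite -E' -J1 -J2; set n := (x ^+ i)%g.
  rewrite !conjgE invgK !expgS expg0 mulg1 !mulgA.
  by rewrite -[(y^-1 * n * y * y)%g]mulgA yy1.
Qed.

Theorem proposition3p3
  (F : finFieldType) (hchar : (3 \in [pchar F])%N)
  (k : nat) (t : int)
  (ht3 : (t ^+ 3 == 1 %[mod (3 * k + 1)%N])%Z)
  (htg : gcdz (3 * k + 1)%N (t - 1) = 1%N)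
  (gT : finGroupType) (x y : gT)
  (hx : (x ^+ (3 * k + 1))%g = 1%g) (hy : (y ^+ 3)%g = 1%g)
  (hxy : (x ^ y)%g = (x ^+ `|(t %% (3 * k + 1)%N)%Z|%N)%g)
  (hgen : <<[set x; y]>>%g = [set: gT])
  (hcard : #|gT| = (3 * (3 * k + 1))%N) :
  ga_ideal (Anh (@s3 F gT)) /\ ga_nilpotent (Anh (@s3 F gT)).
Proof.
have m0 : (0 < 3 * k + 1)%N by rewrite addn1.
have F3 : 3%:R = 0 :> F := pcharf0 hchar.
set c := `|(t %% (3 * k + 1)%N)%Z|%N in hxy.
have hx1 : (x ^+ (c * c + c + 1) = 1)%g.
  have := nt _ _ m0 ht3 htg; rewrite -/c => /dvdnP [q ->].
  by rewrite mulnC expgM hx expg1n.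
pose N := (<[x]>)%G.
have nNy : <[y]>%g \subset 'N(N)%g by rewrite norms_cycle hxy mem_cycle.
have nNx : <[x]>%g \subset 'N(N)%g by apply: normG.
have hnorm : forall g, g \in 'N(N)%g.
  have : <<[set x; y]>>%g \subset 'N(N)%g.
    by rewrite gen_subG subUset !sub1set -!cycle_subG nNx nNy.
  by rewrite hgen => /subsetP H g; apply: H; rewrite inE.
have hG : forall g, g \in (N * <[y]>)%g.
  have : <<[set x; y]>>%g \subset (N <*> <[y]>)%g.
    rewrite gen_subG subUset !sub1set; apply/andP; split.
      by apply: (subsetP (joing_subl _ _)); apply: cycle_id.
    by apply: (subsetP (joing_subr _ _)); apply: cycle_id.
  by rewrite hgen norm_joinEr // => /subsetP H g; apply: H; rewrite inE.
have eqT : (N * <[y]>)%g = [set: gT] by apply/setP => g; rewrite inE hG.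
have hc1 : (#|gT| <= #|N| * #|<[y]>%g|)%N.
  rewrite (mul_cardG N <[y]>%G) eqT cardsT leq_pmulr //.
have ox : (#[x]%g %| 3 * k + 1)%N by rewrite order_dvdn hx.
have oy : (#[y]%g %| 3)%N by rewrite order_dvdn hy.
have cN : #|N| = (3 * k + 1)%N.
  have l1 := dvdn_leq m0 ox; have l2 := dvdn_leq (isT : (0 < 3)%N) oy.
  rewrite hcard in hc1; rewrite /N /= -/(#[x])%g.
  move: hc1; rewrite -/(#[x])%g -/(#[y])%g => hc1.
  apply/eqP; rewrite eqn_leq l1 /=.
  have h := leq_trans hc1 (leq_mul (leqnn #[x]%g) l2).
  by rewrite [(#[x]%g * 3)%N]mulnC leq_pmul2l in h.
have hN1 : #|N|%:R = 1 :> F by rewrite cN natrD natrM F3 mul0r add0r.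
have hyN : y \notin N.
  apply/negP => yN.
  have : (N * <[y]>)%g = N by apply: mulGSid; rewrite cycle_subG.
  rewrite eqT => eN.
  have := cN; rewrite -eN cardsT hcard; lia.
have hy2 : (y ^+ 2 = y^-1)%g by rewrite -(yy _ _ hy) expgS expg1.
have hcover : forall g, [|| g \in N, (y^-1 * g)%g \in N | (y * g)%g \in N].
  move=> g; case/mulsgP: (hG g) => n w hn /cycleP [j ->] ->.
  rewrite -(expg_mod _ hy).
  have : (j %% 3 < 3)%N by rewrite ltn_pmod.
  case: (j %% 3)%N => [|[|[|i]]] // _.
  - by rewrite expg0 mulg1 hn.
  - by rewrite expg1 -conjgE memJ_norm // hn orbT.
  - have -> : (y * (n * y ^+ 2) = n ^ (y^-1))%g by rewrite hy2 conjgE invgK.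
    by rewrite memJ_norm // hn !orbT.
have hs : forall z : gT, 3.-elt%g z = (z == 1%g) || (z \notin N).
  move=> z; case: (boolP (z \in N)) => zN /=.
  - rewrite orbF; case: (z =P 1%g) => [->|nz]; first exact: p_elt1.
    apply/negP => pz; apply: nz; apply/eqP; rewrite -order_eq1; apply/eqP.
    apply: (pnat_1 pz); apply: (@pnat_dvd _ (3 * k + 1)%N).
      by rewrite -cN order_dvdG.
    by rewrite p'natE // dvdn_addr ?dvdn_mulr.
  - rewrite orbT.
    suff h3 : (z ^+ 3 = 1)%g.
      by apply: (pnat_dvd _ (pnat_id _)); rewrite ?order_dvdn ?h3.
    case/or3P: (hcover z) => hz; first by rewrite hz in zN.
    + rewrite -(mulKVg y z); case/cycleP: hz => i ->.
      by case: (cube _ _ _ _ hy hxy hx1 i).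
    + rewrite -(mulKg y z); case/cycleP: hz => i ->.
      by case: (cube _ _ _ _ hy hxy hx1 i).
exact: (main_res _ _ N y F3 hN1 hnorm hcover hyN hy hs).
Qed.
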